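(* Let $H=(V,E,C,\ell)$ be an edge-colored graph with $k$ colors, $x$ a feasible solution of the \textsc{MinECC} LP relaxation, $e=\{u,v\}\in E$ with color $c$ and $x_e=\max\{x_u^c,x_v^c\}$, and $z_0,z_1,\dots$ the color thresholds of $e$. Let $Y$ be the output of GenColorRound applied to $x$ with $I=(\frac12,\frac78)$. Suppose $x_e\in(\frac18,\frac12)$ and there are integers $1\le p\le q$ with $z_{p-1}\le\frac12\le z_p\le z_q\le\frac78\le z_{q+1}$. Then $p=1$, $q\le 6$, and $\Pr[e\in\mathcal M_Y]\le\frac83A_q\,x_e$, where $A_q$ is the optimal value of the linear program in real variables $\omega_1,\dots,\omega_6,\chi$: maximize $\frac{q}{q+1}\cdot\frac78\chi-\sum_{j=1}^q\frac{1}{j(j+1)}\omega_j$ subject to $\omega_i\le\omega_{i+1}$ for $i=1,\dots,5$; $\chi-\omega_1\le1$; $2\chi-\omega_2-\omega_3\le1$; $3\chi-3\omega_5\le1$; $\chi\ge 2$; $\omega_q\le\frac78\chi$.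
   Context: An edge-colored graph is $H=(V,E,C,\ell)$ with colors $C=[k]$, $\ell\colon E\to C$, where every edge is a set of exactly two nodes. A node coloring $Y\colon V\to C$ makes a mistake at $e$ ($e\in\mathcal M_Y$) if some $w\in e$ has $Y[w]\ne\ell(e)$. The \textsc{MinECC} LP relaxation constraints: $\sum_{i=1}^k x_w^i=k-1$ for all $w\in V$; $x_e\ge x_w^{\ell(e)}$ for $w\in e$; $0\le x_w^i\le1$; $0\le x_e\le 1$. Color thresholds of $e$ with color $c$: for $j\in C\setminus\{c\}$ let $m_j=\min_{w\in e}x_w^j$, sorted as $m_{(1)}\le\dots\le m_{(k-1)}$; $z_0=0$, $z_i=m_{(i)}$ for $1\le i\le k-1$, and by convention $z_i=1$ for $i\ge k$. GenColorRound with interval $I$, applied to $x$: draw $\rho$ uniformly from $I$ and, independently, a uniformly random permutation $\pi$ of $[k]$; let $S_i=\{w: x_w^i<\rho\}$; for $w\in\bigcup_iS_i$ set $Y[w]=\pi(j)$ with $j$ the largest index such that $w\in S_{\pi(j)}$; other nodes get an arbitrary color. *)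

(* Defs.v *)
From HB Require Import structures.
From mathcomp Require Import all_boot all_order all_algebra all_fingroup.
From mathcomp Require Import all_classical all_reals all_analysis.
Set Implicit Arguments. Unset Strict Implicit. Unset Printing Implicit Defensive.
Import Order.TTheory GRing.Theory Num.Theory.
Local Open Scope ring_scope.
Local Open Scope classical_set_scope.

(* Edge-colored graph H = (V, E, C, l) with colors C = 'I_k (i.e. [k], 0-based).
   Edges are sets of nodes of cardinality exactly 2; l gives the color of an edge. *)
Definition is_edge_colored_graph (V : finType) (E : {set {set V}}) : Prop :=
  forall e, e \in E -> #|e| = 2%N.

(* Feasibility for the MinECC LP relaxation.
   xn w i = x_w^i,  xe e = x_e. *)
Definition minecc_feasible (R : realType) (V : finType) (k : nat)
    (E : {set {set V}}) (l : {set V} -> 'I_k)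
    (xn : V -> 'I_k -> R) (xe : {set V} -> R) : Prop :=
  [/\ (forall w, \sum_(i < k) xn w i = (k - 1)%:R),
      (forall e w, e \in E -> w \in e -> xn w (l e) <= xe e),
      (forall w i, 0 <= xn w i <= 1)
    & (forall e, e \in E -> 0 <= xe e <= 1)].

Definition color_thresholds (R : realType) (V : finType) (k : nat)
    (xn : V -> 'I_k -> R) (u v : V) (c : 'I_k) (i : nat) : R :=
  if i == 0%N then 0
  else if (i <= k - 1)%N then
    nth 0 (sort <=%R [seq Num.min (xn u j) (xn v j) | j <- enum 'I_k & j != c])
        i.-1
  else 1.

(* GenColorRound output for threshold rho and permutation pi; the nodes not in
   any S_i receive the (arbitrary) color dflt w. *)
Definition gen_color_round (R : realType) (V : finType) (k : nat)
    (xn : V -> 'I_k -> R) (dflt : V -> 'I_k) (rho : R) (pi : {perm 'I_k})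
    (w : V) : 'I_k :=
  match [pick j : 'I_k | (xn w (pi j) < rho) &&
            [forall j' : 'I_k, (j < j')%N ==> ~~ (xn w (pi j') < rho)]] with
  | Some j => pi j
  | None => dflt w
  end.

Definition mistake (V : finType) (k : nat) (l : {set V} -> 'I_k)
    (Y : V -> 'I_k) (e : {set V}) : bool :=
  [exists w in e, Y w != l e].

(* Pr[e in M_Y] for GenColorRound with interval I = (a, b):
   rho uniform on (a,b), pi uniform on permutations of [k], independent. *)
Definition prob_mistake (R : realType) (V : finType) (k : nat)
    (l : {set V} -> 'I_k) (xn : V -> 'I_k -> R) (dflt : V -> 'I_k)
    (a b : R) (e : {set V}) : \bar R :=
  ((\sum_(pi : {perm 'I_k})
      (lebesgue_measure
         [set rho : R | (a < rho < b)%R /\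
            mistake l (gen_color_round xn dflt rho pi) e]
       * ((b - a)^-1)%:E))
   * ((#|{perm 'I_k}|%:R)^-1)%:E)%E.

(* The LP defining A_q, variables omega_1..omega_6 (omega : nat -> R, only
   indices 1..6 used) and chi. *)
Definition Aq_feasible (R : realType) (q : nat) (om : nat -> R) (chi : R) : Prop :=
  (forall i, (1 <= i <= 5)%N -> om i <= om i.+1) /\
  chi - om 1%N <= 1 /\
  2 * chi - om 2%N - om 3%N <= 1 /\
  3 * chi - 3 * om 5%N <= 1 /\
  2 <= chi /\
  om q <= 7 / 8 * chi.

Definition Aq_objective (R : realType) (q : nat) (om : nat -> R) (chi : R) : R :=
  q%:R / q.+1%:R * (7 / 8) * chi
  - \sum_(1 <= j < q.+1) (j%:R * j.+1%:R)^-1 * om j.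

Definition Aq (R : realType) (q : nat) : R :=
  sup [set y : R | exists om chi, Aq_feasible q om chi /\ y = Aq_objective q om chi].

(* Main.v *)
Require Import Defs.
From HB Require Import structures.
From mathcomp Require Import all_boot all_order all_algebra all_fingroup.
From mathcomp Require Import all_classical all_reals all_analysis.
From mathcomp Require Import ring lra zify.
Set Implicit Arguments. Unset Strict Implicit. Unset Printing Implicit Defensive.
Import Order.TTheory GRing.Theory Num.Theory.

Definition maxin (k : nat) (T : seq 'I_k) (t : 'I_k) (pi : {perm 'I_k}) : bool :=
  all (fun d => ((pi^-1)%g d <= (pi^-1)%g t)%N) T.

Lemma maxin_tperm (k : nat) (T : seq 'I_k) (c t : 'I_k) (pi : {perm 'I_k}) :
  c \in T -> t \in T -> maxin T c (pi * tperm c t)%g = maxin T t pi.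
Proof.
move=> cT tT.
have E (x : 'I_k) : ((pi * tperm c t)^-1)%g x = (pi^-1)%g (tperm c t x).
  by rewrite invMg permM tpermV.
apply/idP/idP => /allP H; apply/allP => d dT /=.
- move: (H (tperm c t d)).
  rewrite /= E E tpermK tpermL; apply.
  by case: tpermP => [_|_|_]; rewrite ?cT ?tT ?dT.
- rewrite E E tpermL; apply: H.
  by case: tpermP => [_|_|_]; rewrite ?cT ?tT ?dT.
Qed.

Lemma card_maxin (k : nat) (T : seq 'I_k) (c t : 'I_k) :
  c \in T -> t \in T -> #|[pred pi | maxin T c pi]| = #|[pred pi | maxin T t pi]|.
Proof.
move=> cT tT.
pose f (pi : {perm 'I_k}) := (pi * tperm c t)%g.
have finj : injective f by move=> x y /mulIg.
rewrite -(card_imset [pred pi | maxin T c pi] finj).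
apply: eq_card => pi; rewrite inE /=.
apply/imsetP/idP => [[s sin ->]|H].
  by rewrite /f tpermC maxin_tperm // ; rewrite inE in sin.
exists (f pi); last by rewrite /f -mulgA tperm2 mulg1.
by rewrite inE /= /f maxin_tperm.
Qed.

Lemma count_maxin (k : nat) (T : seq 'I_k) (c : 'I_k) (pi : {perm 'I_k}) :
  uniq T -> c \in T -> count (fun t => maxin T t pi) T = 1%N.
Proof.
move=> uT cT.
case: (@arg_maxnP _ c (mem T) (fun t => (pi^-1)%g t : nat) cT) => t0 t0T Ht0.
have t0T' : t0 \in T by [].
rewrite (@eq_in_count _ _ (pred1 t0)); first by rewrite count_uniq_mem // t0T'.
move=> t tT /=; apply/idP/eqP => [H|->]; last by apply/allP => d dT; exact: Ht0.
have h1 := Ht0 t tT.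
have h2 : ((pi^-1)%g t0 <= (pi^-1)%g t)%N by move/allP: H; apply.
apply: (@perm_inj _ (pi^-1)%g); apply: val_inj => /=; apply/eqP.
by rewrite eqn_leq h2 andbT; exact: h1.
Qed.

Lemma count_before (k : nat) (c : 'I_k) (S : seq 'I_k) : uniq (c :: S) ->
  (#|[pred pi : {perm 'I_k} | all (fun d => (pi^-1)%g d <= (pi^-1)%g c)%N S]| * (size S).+1
   = #|{perm 'I_k}|)%N.
Proof.
move=> uT; set T := c :: S.
have cT : c \in T by rewrite inE eqxx.
have -> : #|[pred pi : {perm 'I_k} | all (fun d => (pi^-1)%g d <= (pi^-1)%g c)%N S]|
   = #|[pred pi | maxin T c pi]|.
  by apply: eq_card => pi; rewrite !inE /maxin /= leqnn.
have -> : #|{perm 'I_k}| = (\sum_(pi : {perm 'I_k}) count (fun t => maxin T t pi) T)%N.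
  by rewrite -sum1_card; apply: eq_bigr => pi _; rewrite (count_maxin _ _ cT).
have -> : (\sum_(pi : {perm 'I_k}) count (fun t => maxin T t pi) T =
   \sum_(t <- T) #|[pred pi | maxin T t pi]|)%N.
  rewrite (eq_bigr (fun pi => \sum_(t <- T) (if maxin T t pi then 1 else 0))%N); last first.
    by move=> pi _; rewrite -big_mkcond sum1_count.
  rewrite exchange_big /=; apply: eq_bigr => t _.
  by rewrite -big_mkcond -sum1_card; apply: eq_bigl => pi; rewrite !inE.
rewrite (@eq_big_seq _ _ _ _ _ _ (fun _ => #|[pred pi | maxin T c pi]|)); last first.
  by move=> t tT; rewrite (card_maxin cT tT).
by rewrite big_const_seq count_predT iter_addn_0 mulnC.
Qed.

Local Open Scope ring_scope.

Lemma tele (R : realFieldType) (s : nat -> R) (n J : nat) :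
  \sum_(i < n) ((J <= i)%N%:R * (s i.+1 - s i)) = s n - s (minn J n).
Proof.
elim: n => [|n IH]; first by rewrite big_ord0 minn0 subrr.
rewrite big_ord_recr /= IH.
case: (leqP J n) => h.
  have -> : minn J n.+1 = J by apply/minn_idPl; exact: leqW.
  rewrite mul1r; ring.
have -> : minn J n.+1 = n.+1 by apply/minn_idPr.
by rewrite mul0r addr0 !subrr.
Qed.

Lemma abel (R : realFieldType) (s : nat -> R) (q : nat) :
  \sum_(i < q) (s i.+1 - s i) * (i.+1%:R / i.+2%:R)
  = s q * (q%:R / q.+1%:R) - \sum_(1 <= j < q.+1) (j%:R * j.+1%:R)^-1 * s j.-1.
Proof.
elim: q => [|q IH]; first by rewrite big_ord0 big_geq // mul0r mulr0 subrr.
rewrite big_ord_recr /= IH [in RHS]big_nat_recr //=.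
have e1 : q.+1%:R = q%:R + 1 :> R by rewrite -natr1.
have e2 : q.+2%:R = q%:R + 2 :> R by rewrite -natr1 e1; ring.
have h0 : (0 : R) <= q%:R by [].
rewrite e1 e2.
have h1 : q%:R + 1 != 0 :> R by apply/lt0r_neq0; lra.
have h2 : q%:R + 2 != 0 :> R by apply/lt0r_neq0; lra.
field; rewrite h1 h2 //.
Qed.

Lemma Aq_ub (R : realType) (q : nat) (om : nat -> R) (chi : R) :
  (1 <= q <= 6)%N -> Aq_feasible q om chi -> Aq_objective q om chi <= 7.
Proof.
move=> /andP[q1 q6] [mon [c1 [c2 [c3 [c4 c5]]]]].
have m1 : forall j, (1 <= j <= 6)%N -> om 1%N <= om j.
  have h1 := mon 1%N erefl; have h2 := mon 2%N erefl; have h3 := mon 3%N erefl.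
  have h4 := mon 4%N erefl; have h5 := mon 5%N erefl.
  move=> [|[|[|[|[|[|[|j]]]]]]] //= _; lra.
have omq := m1 q ltac:(by rewrite q1 q6).
have chi8 : chi <= 8 by lra.
have sum0 : 0 <= \sum_(1 <= j < q.+1) (j%:R * j.+1%:R)^-1 * om j.
  rewrite big_nat; apply: sumr_ge0 => j /andP[j1 jq].
  apply: mulr_ge0; first by rewrite invr_ge0 mulr_ge0.
  have := m1 j ltac:(by rewrite j1 /=; apply: leq_trans q6).
  lra.
rewrite /Aq_objective.
have hq : q%:R / q.+1%:R <= 1 :> R.
  rewrite ler_pdivrMr ?ltr0n // mul1r ler_nat; exact: leqnSn.
have hq0 : 0 <= q%:R / q.+1%:R :> R by rewrite divr_ge0.
set a := q%:R / q.+1%:R in hq hq0 *.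
nra.
Qed.

Lemma Aq_ge (R : realType) (q : nat) (om : nat -> R) (chi : R) :
  (1 <= q <= 6)%N -> Aq_feasible q om chi -> Aq_objective q om chi <= Aq R q.
Proof.
move=> hq hf; apply: ub_le_sup; last by exists om, chi.
exists 7 => y [om' [chi' [hf' ->]]]; exact: Aq_ub hf'.
Qed.

Lemma deficit (R : realType) (V : finType) (k : nat) (xn : V -> 'I_k -> R)
   (w : V) (c : 'I_k) (D : {set 'I_k}) :
  \sum_(i < k) xn w i = (k - 1)%:R -> (forall i, 0 <= xn w i <= 1) -> c \notin D ->
  \sum_(j in D) (1 - xn w j) <= xn w c.
Proof.
move=> hs hb cD.
have k0 : (0 < k)%N by apply: leq_ltn_trans (ltn_ord c).
have tot : \sum_(i < k) (1 - xn w i) = 1.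
  rewrite sumrB hs sumr_const card_ord natrB // -natr1 ; ring.
have hge : forall i, 0 <= 1 - xn w i by move=> i; have := hb i; lra.
have : \sum_(j in D) (1 - xn w j) + (1 - xn w c) <= \sum_(i < k) (1 - xn w i).
  rewrite [X in _ <= X](bigID (mem D)) /=; apply: lerD; first exact: le_refl.
  rewrite (bigD1 c) //= ?cD // lerDl.
  by apply: sumr_ge0 => i _.
rewrite tot; lra.
Qed.

Lemma side (R : realType) (V : finType) (k : nat) (xn : V -> 'I_k -> R)
   (w : V) (c : 'I_k) (D : {set 'I_k}) (t : R) :
  \sum_(i < k) xn w i = (k - 1)%:R -> (forall i, 0 <= xn w i <= 1) -> c \notin D ->
  (forall d, d \in D -> xn w d <= t) ->
  #|D|%:R * (1 - t) <= xn w c.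
Proof.
move=> hs hb cD ht.
apply: le_trans (deficit hs hb cD).
rewrite mulrC mulr_natr -sumr_const; apply: ler_sum => d dD.
have := ht d dD; lra.
Qed.

Lemma pair_def (R : realType) (V : finType) (k : nat) (xn : V -> 'I_k -> R)
   (w : V) (c a b : 'I_k) :
  \sum_(i < k) xn w i = (k - 1)%:R -> (forall i, 0 <= xn w i <= 1) ->
  a != b -> a != c -> b != c ->
  (1 - xn w a) + (1 - xn w b) <= xn w c.
Proof.
move=> hs hb ab ac bc.
have cD : c \notin [set a; b] by rewrite !inE negb_or eq_sym ac eq_sym bc.
have := deficit hs hb cD.
rewrite big_setU1 ?big_set1 //= inE //.
Qed.

Lemma mistake_after (R : realType) (V : finType) (k : nat) (l : {set V} -> 'I_k)
   (xn : V -> 'I_k -> R) (dflt : V -> 'I_k) (e : {set V}) (rho : R) (pi : {perm 'I_k}) :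
  (forall w, w \in e -> xn w (l e) < rho) ->
  mistake l (gen_color_round xn dflt rho pi) e ->
  exists2 w, w \in e & exists d, [/\ d != l e, ((pi^-1)%g (l e) < (pi^-1)%g d)%N & xn w d < rho].
Proof.
move=> H /existsP[w /andP[we Yw]].
exists w => //.
have hc := H w we.
move: Yw; rewrite /gen_color_round.
case: pickP => [j /andP[hj /forallP hall] | hnone] Yw.
  exists (pi j); split => //; rewrite ?permK //.
  case: (ltngtP ((pi^-1)%g (l e)) j) => // h.
    have := hall ((pi^-1)%g (l e)); rewrite h /= permKV hc //.
  have hh : (pi^-1)%g (l e) = j by apply: val_inj.
  by move: Yw; rewrite -hh permKV eqxx.
exfalso.
case: (@arg_maxnP _ ((pi^-1)%g (l e)) (fun j => xn w (pi j) < rho) (fun j => j : nat)).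
  by rewrite /= permKV.
move=> j hj hmax.
have := hnone j; rewrite hj /=.
move/negP; apply; apply/forallP => j'; apply/implyP => hjj'.
apply/negP => hj'; have := hmax j' hj'.
by rewrite /= leqNgt hjj'.
Qed.

Definition mcol (R : realType) (V : finType) (k : nat) (xn : V -> 'I_k -> R)
  (u v : V) (j : 'I_k) : R := Num.min (xn u j) (xn v j).

Definition ccs (R : realType) (V : finType) (k : nat) (xn : V -> 'I_k -> R)
  (u v : V) (c : 'I_k) : seq 'I_k :=
  sort (relpre (mcol xn u v) <=%R) [seq j <- enum 'I_k | j != c].

Lemma size_filter_neq k (c : 'I_k) : size [seq j <- enum 'I_k | j != c] = k.-1.
Proof. have := cardC1 c. rewrite card_ord => <-. rewrite cardE /enum_mem.
by rewrite !size_filter count_filter; apply: eq_count => x /=; rewrite !inE andbT. Qed.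

Lemma size_ccs (R : realType) (V : finType) (k : nat) (xn : V -> 'I_k -> R) u v c :
  size (ccs xn u v c) = (k - 1)%N.
Proof. by rewrite size_sort size_filter_neq subn1. Qed.

Lemma ccs_uniq (R : realType) (V : finType) (k : nat) (xn : V -> 'I_k -> R) u v c :
  uniq (ccs xn u v c).
Proof. by rewrite sort_uniq filter_uniq // enum_uniq. Qed.

Lemma mem_ccs (R : realType) (V : finType) (k : nat) (xn : V -> 'I_k -> R) u v c d :
  (d \in ccs xn u v c) = (d != c).
Proof. by rewrite mem_sort mem_filter mem_enum andbT. Qed.

Lemma zE (R : realType) (V : finType) (k : nat) (xn : V -> 'I_k -> R) u v c i :
  (1 <= i <= k - 1)%N ->
  color_thresholds xn u v c i = mcol xn u v (nth c (ccs xn u v c) i.-1).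
Proof.
move=> /andP[i1 ik].
rewrite /color_thresholds; case: eqP => [i0|_]; first by rewrite i0 in i1.
rewrite ik sort_map (nth_map c) //.
rewrite -/(ccs xn u v c) size_ccs; case: i i1 ik => // i _ /=; exact.
Qed.

Lemma z_le1 (R : realType) (V : finType) (k : nat) (xn : V -> 'I_k -> R) u v c i :
  (forall w j, xn w j <= 1) -> color_thresholds xn u v c i <= 1.
Proof.
move=> h1.
case: i => [|i]; first by rewrite /color_thresholds /= ler01.
case: (leqP i.+1 (k - 1)) => hi.
  rewrite zE ?hi // /mcol ge_min h1 //.
by rewrite /color_thresholds /= leqNgt hi.
Qed.

Lemma zmono (R : realType) (V : finType) (k : nat) (xn : V -> 'I_k -> R) u v c i j :
  (forall w j, xn w j <= 1) -> (1 <= i <= j)%N ->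
  color_thresholds xn u v c i <= color_thresholds xn u v c j.
Proof.
move=> h1 /andP[i1 ij].
case: (leqP j (k - 1)) => hj; last first.
  have -> : color_thresholds xn u v c j = 1.
    rewrite /color_thresholds leqNgt hj /=.
    by case: j hj ij => // j; rewrite ltnNge leqn0 => /negbTE ->.
  exact: z_le1.
have j1 : (1 <= j)%N by apply: leq_trans ij.
have ik : (i <= k - 1)%N by apply: leq_trans hj.
rewrite /color_thresholds.
case: eqP => [i0|_]; first by rewrite i0 in i1.
case: eqP => [j0|_]; first by rewrite j0 in j1.
rewrite ik hj.
set s := sort _ _.
have ss : sorted <=%R s by apply: sort_sorted; exact: le_total.
have szs : size s = (k - 1)%N by rewrite size_sort size_map size_filter_neq subn1.
apply: (sorted_leq_nth le_trans le_refl) => //; rewrite ?inE /= ?szs.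
- by case: i i1 ik {ij} => // i.
- by case: j j1 hj {ij} => // j.
- by case: i i1 ij {ik} => // i _; case: j {hj j1} => // j.
Qed.

Local Open Scope classical_set_scope.
Lemma meas_sub (R : realType) (A : set R) (x y : R) : x <= y ->
  A `<=` `]x, y[%classic -> (lebesgue_measure A <= (y - x)%:E)%E.
Proof.
move=> xy AB.
apply: (@le_trans _ _ (lebesgue_measure `]x, y[%classic)).
  rewrite /lebesgue_measure /lebesgue_stieltjes_measure /measure_extension.
  exact: le_mu_ext.
rewrite lebesgue_measure_itv /= lte_fin.
case: ltP => h; first by rewrite -EFinD.
have -> : y = x by apply/eqP; rewrite eq_le xy h.
by rewrite subrr.
Qed.
Local Close Scope classical_set_scope.


Lemma mem_take_nth (T : eqType) (x0 : T) (s : seq T) n d :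
  d \in take n s -> exists2 i, (i < n)%N & d = nth x0 s i.
Proof.
move=> hd; exists (index d (take n s)).
  have := index_mem d (take n s); rewrite hd size_take.
  move=> h; apply: leq_trans h _; exact: geq_minl.
have hi : (index d (take n s) < size (take n s))%N by rewrite index_mem.
have hin : (index d (take n s) < n)%N.
  by apply: leq_trans hi _; rewrite size_take geq_minl.
by rewrite -(nth_take _ hin) nth_index.
Qed.

Lemma pigeon (R : realType) (V : finType) (k : nat) (xn : V -> 'I_k -> R)
   (u v : V) (c : 'I_k) (n : nat) (t : R) :
  (forall w, \sum_(i < k) xn w i = (k - 1)%:R) -> (forall w i, 0 <= xn w i <= 1) ->
  (n <= k - 1)%N ->
  (forall i, (i < n)%N -> mcol xn u v (nth c (ccs xn u v c) i) <= t) ->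
  exists a b : nat, [/\ (a + b = n)%N, a%:R * (1 - t) <= xn u c & b%:R * (1 - t) <= xn v c].
Proof.
move=> hs hb hn ht.
set cs := ccs xn u v c.
pose D := [set d in take n cs].
pose Du := [set d in D | xn u d <= xn v d].
pose Dv := [set d in D | ~~ (xn u d <= xn v d)].
have cD : forall d, d \in D -> d != c.
  move=> d; rewrite inE => /mem_take; by rewrite mem_ccs.
have tD : forall d, d \in D -> mcol xn u v d <= t.
  move=> d; rewrite inE => /(mem_take_nth c) [i hi ->]; exact: ht.
exists #|Du|, #|Dv|; split.
- have -> : #|Du| = #|[predI D & (fun d => xn u d <= xn v d)]|.
    by apply: eq_card => d; rewrite !inE /=.
  have -> : #|Dv| = #|[predD D & (fun d => xn u d <= xn v d)]|.
    by apply: eq_card => d; rewrite !inE /= andbC.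
  rewrite cardID cardsE.
  move: (ccs_uniq xn u v c); rewrite -/cs => ucs.
  have ut : uniq (take n cs) by apply: take_uniq.
  rewrite (card_uniqP ut) size_take size_ccs.
  by move: hn; rewrite leq_eqVlt => /predU1P[->|->]; rewrite ?ltnn.
- apply: side (hs u) (hb u) _ _.
    by apply/negP => /setIdP[/cD]; rewrite eqxx.
  move=> d /setIdP[dD hd]; have := tD d dD; rewrite /mcol min_l //.
- apply: side (hs v) (hb v) _ _.
    by apply/negP => /setIdP[/cD]; rewrite eqxx.
  move=> d /setIdP[dD hd]; have := tD d dD; rewrite /mcol min_r //.
  by rewrite ltW // ltNge.
Qed.


Lemma main_part1 (R : realType) (V : finType) (k : nat)
    (E : {set {set V}}) (l : {set V} -> 'I_k)
    (xn : V -> 'I_k -> R) (xe : {set V} -> R) (dflt : V -> 'I_k)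
    (u v : V) (p q : nat) :
  is_edge_colored_graph E ->
  minecc_feasible E l xn xe ->
  u != v -> [set u; v] \in E ->
  xe [set u; v] = Num.max (xn u (l [set u; v])) (xn v (l [set u; v])) ->
  1 / 8 < xe [set u; v] < 1 / 2 ->
  (1 <= p <= q)%N ->
  color_thresholds xn u v (l [set u; v]) p.-1 <= 1 / 2 ->
  1 / 2 <= color_thresholds xn u v (l [set u; v]) p ->
  color_thresholds xn u v (l [set u; v]) p <= color_thresholds xn u v (l [set u; v]) q ->
  color_thresholds xn u v (l [set u; v]) q <= 7 / 8 ->
  7 / 8 <= color_thresholds xn u v (l [set u; v]) q.+1 ->
  [/\ p = 1%N, (q <= 6)%N, (q <= k - 1)%N &
      Aq_feasible q (fun j => color_thresholds xn u v (l [set u; v]) j / xe [set u; v])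
        (xe [set u; v])^-1].
Proof.
move=> hg [hsum hle hbox hxe] uv eE hxmax /andP[xlo xhi] /andP[p1 pq] hz0 hz1 hzpq hzq hzq1.
set e := [set u; v] in eE hxmax xlo xhi hz0 hz1 hzpq hzq hzq1 *.
set c := l e in hxmax hz0 hz1 hzpq hzq hzq1 *.
set X := xe e in hxmax xlo xhi *.
set z := color_thresholds xn u v c in hz0 hz1 hzpq hzq hzq1 *.
set cs := ccs xn u v c.
have hb1 : forall w j, xn w j <= 1 by move=> w j; case/andP: (hbox w j).
have ue : u \in e by rewrite !inE eqxx.
have ve : v \in e by rewrite !inE eqxx orbT.
have xuc : xn u c <= X := hle e u eE ue.
have xvc : xn v c <= X := hle e v eE ve.
have hX0 : 0 < X by lra.
have hq : (q <= k - 1)%N.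
  rewrite leqNgt; apply/negP => hk.
  move: hzq; rewrite /z /color_thresholds.
  have -> : (q == 0%N) = false by case: q pq hk {hzpq hzq1} => //; rewrite ltnNge p1.
  rewrite leqNgt hk /=; lra.
have k2 : (1 <= k - 1)%N by apply: leq_trans hq; apply: leq_trans pq.
have ncs : forall i, (i < k - 1)%N -> nth c cs i != c.
  by move=> i hi; rewrite -(mem_ccs xn u v) -/cs mem_nth // size_ccs.
have zi : forall i, (i < k - 1)%N -> z i.+1 = mcol xn u v (nth c cs i).
  by move=> i hi; rewrite /z zE.
have mlow : forall d, d != c -> 1 - X <= mcol xn u v d.
  move=> d dc.
  have hs1 : forall w, w \in e -> 1 - xn w d <= X.
    move=> w we.
    have cD : c \notin [set d] by rewrite inE eq_sym.
    have := deficit (hsum w) (hbox w) cD; rewrite big_set1 => h.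
    apply: le_trans h _; exact: hle.
  rewrite /mcol; case: (leP (xn u d) (xn v d)) => _.
    by have := hs1 u ue; lra.
  by have := hs1 v ve; lra.
have zmo : forall i j, (1 <= i <= j)%N -> z i <= z j.
  by move=> i j hij; apply: zmono.
have hp : p = 1%N.
  apply/eqP; rewrite eqn_leq p1 andbT; apply/negP => hp2.
  case: p hp2 p1 pq hz0 hz1 hzpq => [|[|p]] // _ _ pq hz0 _ _.
  have hpk : (p < k - 1)%N by apply: leq_trans hq; apply: leq_trans pq.
  move: hz0 => /=; rewrite zi //.
  have := mlow _ (ncs _ hpk); lra.
subst p.
have hq6 : (q <= 6)%N.
  rewrite leqNgt; apply/negP => hq7.
  have ht : forall i, (i < 7)%N -> mcol xn u v (nth c cs i) <= 7/8.
    move=> i hi; rewrite -zi; last exact: (leq_trans hi (leq_trans hq7 hq)).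
    apply: le_trans hzq; apply: zmo; apply/andP; split => //; exact: leq_trans hi hq7.
  have [a [b [hab ha hb]]] := @pigeon R V k xn u v c 7 (7/8) hsum hbox
      (leq_trans hq7 hq) ht.
  have ha4 : (a < 4)%N.
    rewrite -(ltr_nat R); move: ha xuc xhi; clear; move=> ha xuc xhi; lra.
  have hb4 : (b < 4)%N.
    rewrite -(ltr_nat R); move: hb xvc xhi; clear; move=> hb xvc xhi; lra.
  by have := leq_add ha4 hb4; rewrite addSn addnS hab.
split => //.
have zbig : forall i, (k - 1 < i)%N -> z i = 1.
  move=> i hi; rewrite /z /color_thresholds leqNgt hi /=.
  by case: i hi => // i; rewrite ltnNge leqn0 => /negbTE ->.
have zl1 : forall i, z i <= 1 by move=> i; apply: z_le1.
have C1 : 1 - z 1 <= X.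
  rewrite (zi 0%N) //; have := mlow _ (ncs _ k2); lra.
have psame : forall a b, a != b -> a != c -> b != c ->
    (xn u a <= xn v a) = (xn u b <= xn v b) ->
    (1 - mcol xn u v a) + (1 - mcol xn u v b) <= X.
  move=> a b ab ac bc; rewrite /mcol; case: (boolP (xn u a <= xn v a)) => ha hab.
    rewrite (min_l ha) (min_l (esym hab)).
    apply: le_trans (pair_def (hsum u) (hbox u) ab ac bc) xuc.
  have hb : ~~ (xn u b <= xn v b) by rewrite -hab.
  rewrite (min_r (ltW _)) ?ltNge // (min_r (ltW _)) ?ltNge //.
  apply: le_trans (pair_def (hsum v) (hbox v) ab ac bc) xvc.
have C2 : 2 - z 2 - z 3 <= X.
  case: (leqP 3 (k - 1)) => hk3; last first.
    rewrite (zbig 3%N hk3).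
    have := zmo 1%N 2%N erefl; lra.
  have hs : size cs = (k - 1)%N by rewrite size_ccs.
  have ucs : uniq cs := ccs_uniq xn u v c.
  have h0 : (0 < size cs)%N by rewrite hs; apply: leq_trans hk3.
  have h1 : (1 < size cs)%N by rewrite hs; apply: leq_trans hk3.
  have h2 : (2 < size cs)%N by rewrite hs.
  have d01 : nth c cs 0 != nth c cs 1 by rewrite nth_uniq.
  have d02 : nth c cs 0 != nth c cs 2 by rewrite nth_uniq.
  have d12 : nth c cs 1 != nth c cs 2 by rewrite nth_uniq.
  have n0 := ncs 0%N ltac:(by rewrite -hs).
  have n1 := ncs 1%N ltac:(by rewrite -hs).
  have n2 := ncs 2%N ltac:(by rewrite -hs).
  have e1 := zi 0%N ltac:(by rewrite -hs). have e2 := zi 1%N ltac:(by rewrite -hs).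
  have e3 := zi 2%N ltac:(by rewrite -hs).
  have m12 := zmo 1%N 2%N erefl. have m23 := zmo 2%N 3%N erefl.
  set b0 := xn u (nth c cs 0) <= xn v (nth c cs 0).
  set b1 := xn u (nth c cs 1) <= xn v (nth c cs 1).
  set b2 := xn u (nth c cs 2) <= xn v (nth c cs 2).
  have : [|| b0 == b1, b0 == b2 | b1 == b2] by case: b0; case: b1; case: b2.
  case/or3P => /eqP hbb.
  - have := psame _ _ d01 n0 n1 hbb; rewrite -e1 -e2; lra.
  - have := psame _ _ d02 n0 n2 hbb; rewrite -e1 -e3; lra.
  - have := psame _ _ d12 n1 n2 hbb; rewrite -e2 -e3; lra.
have C3 : 3 - 3 * z 5 <= X.
  case: (leqP 5 (k - 1)) => hk5; last first.
    by rewrite (zbig 5%N hk5); lra.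
  have ht : forall i, (i < 5)%N -> mcol xn u v (nth c cs i) <= z 5.
    move=> i hi; rewrite -zi; last exact: (leq_trans hi hk5).
    by apply: zmo.
  have [a [b [hab ha hb]]] := @pigeon R V k xn u v c 5 (z 5) hsum hbox hk5 ht.
  have z5 := zl1 5%N.
  case: (leqP 3 a) => h3.
    have : (3 : R) <= a%:R by rewrite (ler_nat R 3 a).
    move: ha xuc z5; clear; move=> ha xuc z5 h; nra.
  have h3b : (3 <= b)%N by move: hab h3; clear; lia.
  have : (3 : R) <= b%:R by rewrite (ler_nat R 3 b).
  move: hb xvc z5; clear; move=> hb xvc z5 h; nra.
have hXi : 0 < X^-1 by rewrite invr_gt0.
refine (conj _ (conj _ (conj _ (conj _ (conj _ _))))).
- move=> i /andP[i1 i5]; rewrite ler_pM2r //; apply: zmo; rewrite i1 /=; exact: leqnSn.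
- have -> : X^-1 - z 1 / X = (1 - z 1) / X by ring.
  by rewrite ler_pdivrMr // mul1r.
- have -> : 2 * X^-1 - z 2 / X - z 3 / X = (2 - z 2 - z 3) / X by ring.
  by rewrite ler_pdivrMr // mul1r.
- have -> : 3 * X^-1 - 3 * (z 5 / X) = (3 - 3 * z 5) / X by ring.
  by rewrite ler_pdivrMr // mul1r.
- rewrite -(ler_pM2r hX0) mulVf ?gt_eqF //; lra.
- by rewrite ler_pM2r.
Qed.


Lemma sum_bool (R : realType) (T : finType) (P : pred T) :
  \sum_(x : T) ((P x : nat)%:R : R) = (#|P|%:R : R).
Proof.
rewrite (eq_bigr (fun x => if P x then 1 else 0)); last by move=> x _; case: (P x).
rewrite -big_mkcond /= sumr_const //.
Qed.

Lemma cnt_lemma (R : realType) (k : nat) (c : 'I_k) (cs : seq 'I_k) (i : nat) :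
  uniq cs -> c \notin cs -> (i.+1 <= size cs)%N ->
  \sum_(pi : {perm 'I_k})
     (((find (fun d => ((pi^-1)%g c < (pi^-1)%g d)%N) cs <= i)%N : nat)%:R : R)
  = #|{perm 'I_k}|%:R * (i.+1%:R / i.+2%:R).
Proof.
move=> ucs ccs hi.
rewrite sum_bool.
set P := [pred pi : {perm 'I_k} | (find (fun d => ((pi^-1)%g c < (pi^-1)%g d)%N) cs <= i)%N].
have hC : #|[predC P]| = #|[pred pi : {perm 'I_k} |
      all (fun d => (pi^-1)%g d <= (pi^-1)%g c)%N (take i.+1 cs)]|.
  apply: eq_card => pi; rewrite !inE /=.
  rewrite -ltnS -has_take_leq // -all_predC.
  by apply: eq_all => d /=; rewrite -leqNgt.
have hu : uniq (c :: take i.+1 cs).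
  rewrite /= take_uniq // andbT; apply/negP => /mem_take; exact/negP.
have hcb := count_before hu.
rewrite size_takel // -hC in hcb.
have hN := cardC P.
set N := #|{perm 'I_k}| in hcb hN *.
have eN : (N%:R : R) = #|P|%:R + #|[predC P]|%:R by rewrite -natrD hN.
have eC : (N%:R : R) = #|[predC P]|%:R * i.+2%:R by rewrite -natrM hcb.
have h2 : (i.+2%:R : R) != 0 by rewrite pnatr_eq0.
have -> : (#|P|%:R : R) = N%:R - #|[predC P]|%:R by rewrite eN; ring.
rewrite eC.
have e1 : i.+2%:R = i.+1%:R + 1 :> R by rewrite -natr1.
rewrite e1 in h2 *. field. apply/lt0r_neq0; have := ler0n R i; lra.
Qed.

Theorem lemma4 (R : realType) (V : finType) (k : nat)
    (E : {set {set V}}) (l : {set V} -> 'I_k)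
    (xn : V -> 'I_k -> R) (xe : {set V} -> R) (dflt : V -> 'I_k)
    (u v : V) (p q : nat) :
  is_edge_colored_graph E ->
  minecc_feasible E l xn xe ->
  u != v -> [set u; v] \in E ->
  xe [set u; v] = Num.max (xn u (l [set u; v])) (xn v (l [set u; v])) ->
  1 / 8 < xe [set u; v] < 1 / 2 ->
  (1 <= p <= q)%N ->
  color_thresholds xn u v (l [set u; v]) p.-1 <= 1 / 2 ->
  1 / 2 <= color_thresholds xn u v (l [set u; v]) p ->
  color_thresholds xn u v (l [set u; v]) p <= color_thresholds xn u v (l [set u; v]) q ->
  color_thresholds xn u v (l [set u; v]) q <= 7 / 8 ->
  7 / 8 <= color_thresholds xn u v (l [set u; v]) q.+1 ->
  [/\ p = 1%N, (q <= 6)%N &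
      (prob_mistake l xn dflt (1 / 2) (7 / 8) [set u; v]
       <= (8 / 3 * Aq R q * xe [set u; v])%:E)%E].
Proof.
move=> hg hfeas uv eE hxmax hxe' hpq hz0 hz1 hzpq hzq hzq1.
have [hp hq6 hq hf] := main_part1 dflt hg hfeas uv eE hxmax hxe' hpq hz0 hz1 hzpq hzq hzq1.
split => //.
subst p.
case: hfeas => hsum hle hbox hxe.
move: hxe' hpq => /andP[xlo xhi] /andP[_ q1].
set e := [set u; v] in eE hxmax xlo xhi hz0 hz1 hzpq hzq hzq1 hf *.
set c := l e in hxmax hz0 hz1 hzpq hzq hzq1 hf *.
set X := xe e in hxmax xlo xhi hf *.
set z := color_thresholds xn u v c in hz0 hz1 hzpq hzq hzq1 hf *.
set cs := ccs xn u v c.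
have hb1 : forall w j, xn w j <= 1 by move=> w j; case/andP: (hbox w j).
have ue : u \in e by rewrite !inE eqxx.
have ve : v \in e by rewrite !inE eqxx orbT.
have xuc : xn u c <= X := hle e u eE ue.
have xvc : xn v c <= X := hle e v eE ve.
have hX0 : 0 < X by lra.
have hs : size cs = (k - 1)%N by rewrite size_ccs.
have ucs : uniq cs := ccs_uniq xn u v c.
have ccs' : c \notin cs by rewrite mem_ccs eqxx.
have zi : forall i, (i < k - 1)%N -> z i.+1 = mcol xn u v (nth c cs i).
  by move=> i hi; rewrite /z zE.
have zmo : forall i j, (1 <= i <= j)%N -> z i <= z j.
  by move=> i j hij; apply: zmono.
pose s i := if (i < q)%N then z i.+1 else 7/8.
pose J (pi : {perm 'I_k}) := find (fun d => ((pi^-1)%g c < (pi^-1)%g d)%N) cs.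
pose N := #|{perm 'I_k}|.
pose L := \sum_(i < q) (s i.+1 - s i) * (i.+1%:R / i.+2%:R).
have sle : forall i, s i <= 7/8.
  move=> i; rewrite /s; case: ltnP => hi //.
  apply: le_trans hzq; apply: zmo; exact: hi.
have incl : forall pi, ([set rho : R | (1/2 < rho < 7/8)%R /\
     mistake l (gen_color_round xn dflt rho pi) e] `<=` `]s (J pi), 7/8[)%classic.
  move=> pi rho [/andP[r1 r2] hm].
  have hc : forall w, w \in e -> xn w c < rho.
    move=> w we; have := hle e w eE we; rewrite -/X -/c; lra.
  have [w we [d [dc haft hd]]] := mistake_after hc hm.
  have md : mcol xn u v d < rho.
    move: we hd; rewrite !inE => /orP[/eqP->|/eqP->] hd; rewrite /mcol gt_min hd ?orbT //.
  have dcs : d \in cs by rewrite mem_ccs.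
  set r := index d cs.
  have hr : (r < size cs)%N by rewrite index_mem.
  have ndr : nth c cs r = d by rewrite nth_index.
  have Jr : (J pi <= r)%N.
    rewrite leqNgt; apply/negP => h.
    by have := before_find c h; rewrite ndr haft.
  have zr : z r.+1 = mcol xn u v d by rewrite zi -?hs // ndr.
  have rq : (r < q)%N.
    rewrite ltnNge; apply/negP => h.
    have : z q.+1 <= z r.+1 by apply: zmo.
    lra.
  have JQ : (J pi < q)%N by apply: leq_ltn_trans rq.
  rewrite /= in_itv /=; apply/andP; split => //.
  rewrite /s JQ; apply: le_lt_trans md; rewrite -zr; apply: zmo; exact: Jr.
have mu_le : forall pi, (lebesgue_measure ([set rho : R | (1/2 < rho < 7/8)%R /\
     mistake l (gen_color_round xn dflt rho pi) e])%classic <= (7/8 - s (J pi))%:E)%E.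
  by move=> pi; apply: meas_sub; [exact: sle | exact: incl].
have tel : forall pi, 7/8 - s (J pi) = \sum_(i < q) ((J pi <= i)%N%:R) * (s i.+1 - s i).
  move=> pi; rewrite tele.
  have -> : s q = 7/8 by rewrite /s ltnn.
  case: (leqP (J pi) q) => h //.
  by rewrite /s ltnn ltnNge (ltnW h).
have cnt : forall i, (i < q)%N -> \sum_(pi : {perm 'I_k}) (((J pi <= i)%N : nat)%:R : R)
     = N%:R * (i.+1%:R / i.+2%:R).
  move=> i hi; apply: cnt_lemma => //.
  by rewrite hs; apply: leq_trans hq.
have sumJ : \sum_(pi : {perm 'I_k}) (7/8 - s (J pi)) = N%:R * L.
  rewrite (eq_bigr _ (fun pi _ => tel pi)) exchange_big /= /L mulr_sumr.
  apply: eq_bigr => i _.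
  rewrite -mulr_suml cnt //; ring.
have Lobj : L = X * Aq_objective q (fun j => z j / X) X^-1.
  rewrite /L abel.
  have -> : s q = 7/8 by rewrite /s ltnn.
  rewrite /Aq_objective.
  have -> : \sum_(1 <= j < q.+1) (j%:R * j.+1%:R)^-1 * s j.-1
      = \sum_(1 <= j < q.+1) (j%:R * j.+1%:R)^-1 * z j.
    rewrite !big_nat; apply: eq_bigr => j /andP[j1 jq]; rewrite /s.
    by case: j j1 jq => // j _ /= jq; rewrite ltnS in jq; rewrite jq.
  have -> : \sum_(1 <= j < q.+1) (j%:R * j.+1%:R)^-1 * (z j / X)
      = (\sum_(1 <= j < q.+1) (j%:R * j.+1%:R)^-1 * z j) / X.
    by rewrite mulr_suml; apply: eq_bigr => j _; ring.
  field; rewrite (lt0r_neq0 hX0) /=; apply/lt0r_neq0; have := ler0n R q; lra.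
have objle := Aq_ge (ltac:(by rewrite q1 hq6) : (1 <= q <= 6)%N) hf.
rewrite /prob_mistake.
have hr : ((7/8 - 1/2 : R)^-1) = 8/3 by field.
have N0 : (0 < N)%N by rewrite /N card_Sn fact_gt0.
have N0' : (N%:R : R) != 0 by rewrite pnatr_eq0 -lt0n.
apply: (@le_trans _ _ ((\sum_pi ((7/8 - s (J pi)) * (7/8-1/2)^-1)) * N%:R^-1)%:E).
  rewrite EFinM; apply: lee_wpmul2r; first by rewrite lee_fin invr_ge0.
  rewrite -sumEFin; apply: lee_sum => pi _; rewrite EFinM; apply: lee_wpmul2r; last exact: mu_le.
  by rewrite lee_fin hr; lra.
rewrite lee_fin -mulr_suml sumJ hr.
have -> : N%:R * L * (8/3) * N%:R^-1 = L * (8/3) by field.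
rewrite Lobj; nra.
Qed.
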